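(* Let $\Gamma$ be an elliptic graph with NN-elliptic sequence $\{B_j\}_{j=-1}^m$ and associated cycles $C_j=\sum_{i=-1}^j Z_{B_i}$ ($-1\le j\le m$). Let $\ell\in Supp(P_0)$ be an exponent of the canonical polynomial of $\Gamma$ and let $l'$ be its associated cycle. Then (1) $l'\in\{C_{-1},C_0,\dots,C_{m-1}\}$; (2) for every $j$ and every $\ell\in Supp_j(P_0)$ one has $\mathcal V^{<0}(\ell)=\mathcal V(\Gamma)\setminus \mathcal V(B_{j+1})$.
   Context: Let $\Gamma$ be a finite connected tree with vertex set $\mathcal V$, each vertex $v$ decorated by an integer $e_v$ (all genus decorations zero). Let $L$ be the free abelian group with basis $\{E_v\}_{v\in\mathcal V}$ and symmetric bilinear form $(E_v,E_v)=e_v$, $(E_v,E_w)=1$ if $v\neq w$ are adjacent and $0$ otherwise; it is assumed negative definite. Let $L'=\{l'\in L\otimes\mathbb Q:(l',l)\in\mathbb Z\ \forall l\in L\}$, $H=L'/L$, and $[l']$ the class of $l'$. Let $E_v^*\in L'$ be defined by $(E_v^*,E_w)=-\delta_{vw}$. For $l'=\sum_v l'_vE_v$ write $l'_1\ge l'_2$ if $l'_{1,v}\ge l'_{2,v}$ for all $v$, $l'_1\prec l'_2$ if $l'_{1,v}<l'_{2,v}$ for all $v$, $l>0$ if $l\ge0,l\ne0$; $|l'|=\{v:l'_v\ne0\}$; $E=\sum_vE_v$; $\delta_v$ is the valency of $v$. The anticanonical cycle $Z_K\in L'$ is defined by $(Z_K,E_v)=e_v+2$ for all $v$, and $\chi(l')=-(l',l'-Z_K)/2$.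 Let $\mathcal S'=\{l'\in L':(l',E_v)\le0\ \forall v\}$, $\mathcal S'_h=\{l'\in\mathcal S':[l']=h\}$, and $s_h=\min\mathcal S'_h$ (coordinatewise minimum; it lies in $\mathcal S'_h$). For a connected full subgraph $B$ the same notions are defined using only the vertices of $B$; $Z_{min}(B)$ denotes the minimal nonzero element of $\mathcal S'(B)\cap L(B)$. Topological Poincaré series: $Z(\mathbf t)=\sum_{l'\in L'}z(l')\mathbf t^{l'}$ is the Taylor expansion at the origin of $\prod_{v}(1-\mathbf t^{E_v^*})^{\delta_v-2}$, where $\mathbf t^{l'}=\prod_v t_v^{l'_v}$. Canonical polynomial: $P_0(\mathbf t)=\sum_{\ell\in L,\ \ell\not\prec 0}w(\ell)\mathbf t^{\ell}$ with $w(\ell)=z(Z_K-E-\ell)$, and $Supp(P_0)=\{\ell\in L:\ell\not\prec0,\ w(\ell)\ne0\}$. An elliptic graph is such a $\Gamma$ with $e_v\le-2$ for all $v$ and $\min_{l\in L,l>0}\chi(l)=0$. The minimally elliptic cycle $C$ is the unique $C\in L$, $C>0$, with $\chi(C)=0$ and $\chi(l)>0$ for $0<l<C$. NN-elliptic sequence: $B_{-1}=\Gamma$, $Z_{B_{-1}}=s_{[Z_K]}$, $B_0=|Z_K-s_{[Z_K]}|$; for $j\ge0$, $Z_{B_j}=Z_{min}(B_j)$ (viewed in $L$), and if $Z_K-\sum_{i=-1}^jZ_{B_i}\neq0$ one sets $B_{j+1}=|Z_K-\sum_{i=-1}^jZ_{B_i}|$; $m$ is the index with $Z_K=\sum_{i=-1}^mZ_{B_i}$.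 (It is known that this is well defined, each $B_j$, $j\ge0$, is a connected elliptic full subgraph, and $B_m=|C|$.) Set $C_j=\sum_{i=-1}^jZ_{B_i}$. For $\ell\in Supp(P_0)$ let $\mathcal V^{<0}(\ell)=\{v:\ell_v<0\}$; its associated cycle is the unique $l'\in L'$ with $\ell=Z_K-E-l'-\sum_{v\in\mathcal V^{<0}(\ell)}m_vE_v$, where $l'\le Z_K$, $l'_v=(Z_K)_v$ for $v\in\mathcal V^{<0}(\ell)$, and $m_v\in\mathbb Z_{\ge0}$. $Supp_j(P_0)$ denotes the set of $\ell\in Supp(P_0)$ whose associated cycle is $C_j$. *)

(* Defs.v *)
From HB Require Import structures.
From mathcomp Require Import all_boot all_order all_algebra.
Set Implicit Arguments. Unset Strict Implicit. Unset Printing Implicit Defensive.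
Import Order.TTheory GRing.Theory Num.Theory.
Local Open Scope ring_scope.

(* Elements of L (x) Q are row vectors 'rV[rat]_n (coordinates in the basis E_v). *)
Section Plumbing.
Variables (n : nat) (adj : rel 'I_n) (e : 'I_n -> int).

Definition vec := 'rV[rat]_n.

(* Finite simple graph which is a tree: symmetric, irreflexive, connected,
   with exactly n-1 (unordered) edges. *)
Definition is_tree : Prop :=
  [/\ symmetric adj, irreflexive adj, (forall u v, connect adj u v) &
      #|[set p : 'I_n * 'I_n | adj p.1 p.2]| = (n.-1).*2 ]%N.

Definition valency (v : 'I_n) : nat := #|[set w | adj v w]|.

Definition Imx : 'M[rat]_n :=
  \matrix_(v, w) (if v == w then (e v)%:~R else if adj v w then 1 else 0).

Definition bil (x y : vec) : rat := (x *m Imx *m y^T) 0 0.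

Definition Ebas (v : 'I_n) : vec := delta_mx 0 v.

Definition Eall : vec := \row_v 1.

Definition neg_def : Prop := forall x : vec, x != 0 -> bil x x < 0.

Definition inL (x : vec) : Prop := forall v, x 0 v \is a Num.int.

Definition inL' (x : vec) : Prop := forall l : vec, inL l -> bil x l \is a Num.int.

(* E_v^* : (E_v^*, E_w) = - delta_vw *)
Definition Estar (v : 'I_n) : vec := - row v (invmx Imx).

(* anticanonical cycle: (Z_K, E_v) = e_v + 2 *)
Definition ZK : vec := (\row_v ((e v)%:~R + 2)) *m invmx Imx.

Definition chi (x : vec) : rat := - bil x (x - ZK) / 2.

Definition vle (x y : vec) : Prop := forall v, x 0 v <= y 0 v.
Definition vprec (x y : vec) : Prop := forall v, x 0 v < y 0 v.
Definition vpos (x : vec) : Prop := vle 0 x /\ x <> 0.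

Definition supp (x : vec) : {set 'I_n} := [set v | x 0 v != 0].

Definition inSp (x : vec) : Prop := inL' x /\ forall v, bil x (Ebas v) <= 0.

Definition is_s_ZK (x : vec) : Prop :=
  [/\ inSp x, inL (x - ZK) &
      forall y, inSp y -> inL (y - ZK) -> vle x y].

Definition in_SpL_B (B : {set 'I_n}) (y : vec) : Prop :=
  [/\ inL y, (forall v, v \notin B -> y 0 v = 0) &
      forall v, v \in B -> bil y (Ebas v) <= 0].
Definition is_Zmin (B : {set 'I_n}) (z : vec) : Prop :=
  [/\ in_SpL_B B z, z <> 0 &
      forall y, in_SpL_B B y -> y <> 0 -> vle y z -> y = z].

Definition elliptic : Prop :=
  [/\ (forall v, e v <= -2),
      (exists l, [/\ inL l, vpos l & chi l = 0]) &
      (forall l, inL l -> vpos l -> 0 <= chi l)].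

(* coefficient of x^k in the Taylor expansion of (1 - x)^d at 0 *)
Definition taylor_coef (d : int) (k : nat) : rat :=
  match d with
  | Posz a => (-1) ^+ k * ('C(a, k))%:R
  | Negz a => ('C(k + a, k))%:R   (* d = -(a+1) *)
  end.

(* Coefficient z(l') of t^{l'} in the expansion of
   prod_v (1 - t^{E_v^*})^{delta_v - 2}:
   sum over k in N^V with sum_v k_v E_v^* = l' of prod_v coef_v(k_v).
   Any such k satisfies k_w = -(l', E_w), so k_w < bound l'; the
   truncation to k_w < bound l' is therefore exact. *)
Definition zbound (x : vec) : nat :=
  (\sum_w `|Num.floor (bil x (Ebas w))|)%N.+1.
Definition zcoef (x : vec) : rat :=
  \sum_(k : {ffun 'I_n -> 'I_(zbound x)} |
          \sum_v ((k v : nat)%:R *: Estar v) == x)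
     \prod_v taylor_coef ((valency v)%:Z - 2) (k v).

Definition inSuppP0 (ell : vec) : Prop :=
  [/\ inL ell, ~ vprec ell 0 & zcoef (ZK - Eall - ell) != 0].

Definition negset (ell : vec) : {set 'I_n} := [set v | ell 0 v < 0].

Definition assoc_cycle (ell l' : vec) : Prop :=
  [/\ inL' l', vle l' ZK, (forall v, v \in negset ell -> l' 0 v = ZK 0 v) &
      exists mv : 'I_n -> nat,
        ell = ZK - Eall - l' - \sum_(v in negset ell) (mv v)%:R *: Ebas v].

(* NN-elliptic sequence, with shifted indices:
   Bs k = B_{k-1}, Zs k = Z_{B_{k-1}}, Cs k = C_{k-1} (k = 0, ..., m+1). *)
Definition Cs (Zs : nat -> vec) (k : nat) : vec := \sum_(i < k.+1) Zs i.

Definition NN_seq (m : nat) (Bs : nat -> {set 'I_n}) (Zs : nat -> vec) : Prop :=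
  [/\ Bs 0%N = setT, is_s_ZK (Zs 0%N),
      (forall k, (1 <= k <= m.+1)%N -> is_Zmin (Bs k) (Zs k)),
      (forall k, (k <= m)%N -> Cs Zs k <> ZK /\ Bs k.+1 = supp (ZK - Cs Zs k)) &
      Cs Zs m.+1 = ZK].

End Plumbing.

(* Main.v *)
Require Import Defs.
From mathcomp Require Import all_boot all_order all_algebra zify ring lra.
Import Order.TTheory GRing.Theory Num.Theory.
Set Implicit Arguments. Unset Strict Implicit. Unset Printing Implicit Defensive.
Local Open Scope ring_scope.

Section Basics.
Variables (n : nat) (adj : rel 'I_n) (e : 'I_n -> int).
Hypothesis adj_sym : symmetric adj.
Implicit Types (x y a b c l : vec n) (v w : 'I_n).

Local Notation Imx := (Imx adj e).
Local Notation bil := (bil adj e).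

Lemma ImxE (v w : 'I_n) : Imx v w = if v == w then (e v)%:~R else if adj v w then 1 else 0.
Proof. by rewrite /Defs.Imx mxE. Qed.

Lemma Imx_tr : Imx^T = Imx.
Proof.
apply/matrixP => v w; rewrite mxE !ImxE eq_sym adj_sym.
by case: eqP => // ->.
Qed.

Lemma Imx_off (v w : 'I_n) : v != w -> 0 <= Imx v w.
Proof. by rewrite ImxE => /negbTE ->; case: adj. Qed.

Lemma bilE x w : bil x (Ebas w) = \sum_v x 0 v * Imx v w.
Proof.
rewrite /Defs.bil /Ebas trmx_delta mxE (bigD1 w) //= big1 => [|k kw].
  by rewrite !mxE !eqxx mulr1 addr0.
by rewrite [delta_mx _ _ _ _]mxE (negbTE kw) mulr0.
Qed.

Lemma mulImxE x w : (x *m Imx) 0 w = bil x (Ebas w).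
Proof. by rewrite bilE mxE. Qed.

Lemma bil_sum x y : bil x y = \sum_w y 0 w * bil x (Ebas w).
Proof.
rewrite (eq_bigr (fun w => y 0 w * (x *m Imx) 0 w)); last by move=> w _; rewrite mulImxE.
rewrite /Defs.bil mxE; apply: eq_bigr => w _; by rewrite [y^T _ _]mxE mulrC.
Qed.

Lemma bil_sym x y : bil x y = bil y x.
Proof.
rewrite /Defs.bil -[in LHS](trmxK (x *m Imx *m y^T)) mxE.
by rewrite !trmx_mul trmxK Imx_tr mulmxA.
Qed.

Lemma bilDl x1 x2 y : bil (x1 + x2) y = bil x1 y + bil x2 y.
Proof. by rewrite /Defs.bil !mulmxDl mxE. Qed.
Lemma bilNl x y : bil (- x) y = - bil x y.
Proof. by rewrite /Defs.bil !mulNmx mxE. Qed.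
Lemma bilBl x1 x2 y : bil (x1 - x2) y = bil x1 y - bil x2 y.
Proof. by rewrite bilDl bilNl. Qed.
Lemma bilZl (a : rat) x y : bil (a *: x) y = a * bil x y.
Proof. by rewrite /Defs.bil -!scalemxAl mxE. Qed.
Lemma bilDr x y1 y2 : bil x (y1 + y2) = bil x y1 + bil x y2.
Proof. by rewrite !(bil_sym x) bilDl. Qed.
Lemma bilNr x y : bil x (- y) = - bil x y.
Proof. by rewrite !(bil_sym x) bilNl. Qed.
Lemma bilBr x y1 y2 : bil x (y1 - y2) = bil x y1 - bil x y2.
Proof. by rewrite bilDr bilNr. Qed.
Lemma bil0l y : bil 0 y = 0.
Proof. by rewrite /Defs.bil !mul0mx mxE. Qed.

Lemma bil_sumr x (I : finType) (F : I -> vec n) :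
  bil (\sum_i F i) x = \sum_i bil (F i) x.
Proof.
by rewrite /Defs.bil !mulmx_suml summxE.
Qed.

Lemma Ebas_coord (v w : 'I_n) : (Ebas v) 0 w = (v == w)%:R.
Proof. by rewrite /Ebas mxE eqxx eq_sym. Qed.

Lemma bilEE (v w : 'I_n) : bil (Ebas v) (Ebas w) = Imx v w.
Proof.
rewrite bilE (bigD1 v) //= big1 => [|k kv]; first by rewrite Ebas_coord eqxx mul1r addr0.
by rewrite Ebas_coord eq_sym (negbTE kv) mul0r.
Qed.

Lemma vaddE x y w : (x + y) 0 w = x 0 w + y 0 w. Proof. by rewrite mxE. Qed.
Lemma voppE x w : (- x) 0 w = - x 0 w. Proof. by rewrite mxE. Qed.
Lemma vsubE x y w : (x - y) 0 w = x 0 w - y 0 w. Proof. by rewrite !mxE. Qed.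
Lemma vzeroE w : (0 : vec n) 0 w = 0. Proof. by rewrite mxE. Qed.

Lemma bil_mono x y v : vle x y -> x 0 v = y 0 v ->
  bil x (Ebas v) <= bil y (Ebas v).
Proof.
move=> xy xyv; rewrite -subr_ge0 -bilBl bilE; apply: sumr_ge0 => w _.
case: (eqVneq w v) => [->|wv]; first by rewrite !mxE xyv subrr mul0r.
by apply: mulr_ge0; [rewrite !mxE subr_ge0; apply: xy | exact: Imx_off].
Qed.

End Basics.
Section Neg.
Variables (n : nat) (adj : rel 'I_n) (e : 'I_n -> int).
Hypothesis adj_sym : symmetric adj.
Implicit Types (x y a b c l : vec n) (v w : 'I_n).
Hypothesis negd : neg_def adj e.

Local Notation Imx := (Imx adj e).
Local Notation bil := (bil adj e).
Local Notation ZK := (ZK adj e).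
Local Notation chi := (chi adj e).

Lemma Imx_unit : Imx \in unitmx.
Proof.
rewrite unitmxE unitfE; apply/negP => /det0P [v v0 vI].
have := negd v0; rewrite /Defs.bil vI mul0mx mxE ltxx //.
Qed.

Lemma ZK_Imx : ZK *m Imx = \row_v ((e v)%:~R + 2).
Proof. by rewrite /Defs.ZK mulmxKV // Imx_unit. Qed.

Lemma bil_ZK w : bil ZK (Ebas w) = (e w)%:~R + 2.
Proof. by rewrite -mulImxE ZK_Imx mxE. Qed.

Lemma Estar_Imx v : Estar adj e v *m Imx = - Ebas v.
Proof.
by rewrite /Estar mulNmx -row_mul mulVmx ?Imx_unit // row1.
Qed.

Lemma bil_Estar v w : bil (Estar adj e v) (Ebas w) = - (v == w)%:R.
Proof. by rewrite -mulImxE Estar_Imx mxE Ebas_coord. Qed.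

Lemma intD (x y : rat) : x \is a Num.int -> y \is a Num.int -> x + y \is a Num.int.
Proof. exact: rpredD. Qed.
Lemma intN (x : rat) : x \is a Num.int -> - x \is a Num.int.
Proof. by rewrite rpredN. Qed.
Lemma intM (x y : rat) : x \is a Num.int -> y \is a Num.int -> x * y \is a Num.int.
Proof. exact: rpredM. Qed.

Lemma int_lt (x y : rat) : x \is a Num.int -> y \is a Num.int -> x < y -> x + 1 <= y.
Proof.
move=> /intrP[a ->] /intrP[b ->]; rewrite ltr_int.
rewrite -[1]/((1%:Z)%:~R) -rmorphD ler_int /=; lia.
Qed.

Lemma int_sum (I : finType) (F : I -> rat) : (forall i, F i \is a Num.int) ->
  \sum_i F i \is a Num.int.
Proof. by move=> H; apply: rpred_sum => i _; apply: H. Qed.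

Lemma inLD x y : inL x -> inL y -> inL (x + y).
Proof. by move=> hx hy v; rewrite mxE; apply: intD. Qed.
Lemma inLN x : inL x -> inL (- x).
Proof. by move=> hx v; rewrite mxE; apply: intN. Qed.
Lemma inLB x y : inL x -> inL y -> inL (x - y).
Proof. by move=> hx hy; apply: inLD => //; apply: inLN. Qed.
Lemma inL0 : inL (0 : vec n).
Proof. by move=> v; rewrite mxE. Qed.
Lemma inLE v : inL (Ebas v).
Proof. by move=> w; rewrite Ebas_coord; case: eqP. Qed.

Lemma inL'P x : inL' adj e x <-> forall w, bil x (Ebas w) \is a Num.int.
Proof.
split=> [H w|H l hl]; first exact/H/inLE.
by rewrite bil_sum; apply: int_sum => w; apply: intM.
Qed.

Lemma inL'D x y : inL' adj e x -> inL' adj e y -> inL' adj e (x + y).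
Proof. by move=> /inL'P hx /inL'P hy; apply/inL'P => w; rewrite bilDl intD. Qed.
Lemma inL'N x : inL' adj e x -> inL' adj e (- x).
Proof. by move=> /inL'P hx; apply/inL'P => w; rewrite bilNl intN. Qed.
Lemma inL_L' x : inL x -> inL' adj e x.
Proof.
move=> hx; apply/inL'P => w; rewrite bilE; apply: int_sum => v; apply: intM => //.
by rewrite ImxE; case: eqP => _; [exact: intr_int | case: adj].
Qed.
Lemma inL'_ZK : inL' adj e ZK.
Proof. by apply/inL'P => w; rewrite bil_ZK intD // intr_int. Qed.

Lemma chiD a b : chi (a + b) = chi a + chi b - bil a b.
Proof.
rewrite /Defs.chi.
rewrite !(bilDl, bilDr, bilNr, bilNl) // (bil_sym e adj_sym b a); by field.
Qed.

Lemma chiE v : chi (Ebas v) = 1.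
Proof.
rewrite /Defs.chi bilBr // bilEE ImxE eqxx (bil_sym e adj_sym) bil_ZK; by field.
Qed.

Lemma chi_dual a : chi a = bil a (ZK - a) / 2.
Proof. by rewrite /Defs.chi -(opprB a ZK) bilNr. Qed.

End Neg.
Section Main.
Variables (n : nat) (adj : rel 'I_n) (e : 'I_n -> int).
Hypothesis adj_sym : symmetric adj.
Implicit Types (x y c l : vec n) (v w a b : 'I_n).
Hypothesis negd : neg_def adj e.
Hypothesis e_le : forall v, e v <= -2.
Hypothesis chi_ge0 : forall l, inL l -> vpos l -> 0 <= chi adj e l.
Hypothesis conn : forall u v, connect adj u v.

Local Notation Imx := (Imx adj e).
Local Notation bil := (bil adj e).
Local Notation ZK := (ZK adj e).
Local Notation chi := (chi adj e).

Lemma cross (P : {set 'I_n}) u v : u \in P -> v \notin P ->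
  exists a b, [/\ adj a b, a \in P & b \notin P].
Proof.
move: (conn u v) => /connectP [p]; elim: p u => [|w p IH] u /=.
  by move=> _ -> ->.
move=> /andP[uw pw] lastE uP vnP.
case: (boolP (w \in P)) => wP; first exact: (IH w).
by exists u, w.
Qed.

Lemma vle_antisym x y : vle x y -> vle y x -> x = y.
Proof.
move=> h1 h2; apply/matrixP => i j; rewrite [i]ord1; apply/eqP.
by rewrite eq_le h1 h2.
Qed.

Lemma suppE x v : (v \in supp x) = (x 0 v != 0).
Proof. by rewrite inE. Qed.

Lemma bil_terms_ge0 l b : vle 0 l -> l 0 b = 0 ->
  forall w, 0 <= l 0 w * Imx w b.
Proof.
move=> l0 lb w; case: (eqVneq w b) => [->|wb]; first by rewrite lb mul0r.
by apply: mulr_ge0; [move: (l0 w); rewrite mxE | exact: Imx_off].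
Qed.

Lemma bil_ge1 l b a : vle 0 l -> l 0 b = 0 -> adj a b -> a != b ->
  l 0 a <= bil l (Ebas b).
Proof.
move=> l0 lb ab anb; rewrite bilE (bigD1 a) //= ImxE (negbTE anb) ab mulr1.
rewrite lerDl; apply: sumr_ge0 => w _; exact: bil_terms_ge0.
Qed.

Lemma bil_ge2 l b a1 a2 : vle 0 l -> l 0 b = 0 -> adj a1 b -> a1 != b ->
  adj a2 b -> a2 != b -> a1 != a2 ->
  l 0 a1 + l 0 a2 <= bil l (Ebas b).
Proof.
move=> l0 lb ab1 anb1 ab2 anb2 a12; rewrite bilE (bigD1 a1) //= ImxE (negbTE anb1) ab1 mulr1.
rewrite lerD2l (bigD1 a2) /=; last by rewrite eq_sym.
rewrite ImxE (negbTE anb2) ab2 mulr1 lerDl; apply: sumr_ge0 => w _; exact: bil_terms_ge0.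
Qed.

Lemma int_ge1 (x : rat) : x \is a Num.int -> 0 < x -> 1 <= x.
Proof.
have h0 : (0 : rat) \is a Num.int by rewrite rpred0.
by move=> xi /(int_lt h0 xi); rewrite add0r.
Qed.

Lemma supp_pos l v : inL l -> vle 0 l -> v \in supp l -> 1 <= l 0 v.
Proof.
move=> li l0; rewrite suppE => lv; apply: int_ge1 => //.
by rewrite lt_def lv; move: (l0 v); rewrite mxE.
Qed.

Lemma conn_split_k (k : nat) : forall l (S : {set 'I_n}), (#|~: supp l| <= k)%N ->
  inL l -> vle 0 l -> chi l <= 0 -> S \subset supp l ->
  (exists s, s \in S) -> (exists t, t \in supp l :\: S) ->
  (forall a b, a \in S -> b \in supp l :\: S -> ~~ adj a b) -> False.
Proof.
elim: k => [|k IH] l S hk li l0 chil sS [s sS'] [t tS] noedge.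
- have tnS : t \notin S by move: tS; rewrite !inE => /andP[].
  have [a [b [ab aS bS]]] := cross sS' tnS.
  have bsupp : b \in supp l.
    apply: contraTT hk => bn; rewrite -ltnNge card_gt0; apply/set0Pn; exists b.
    by rewrite inE.
  by have := noedge a b aS; rewrite inE bS bsupp ab => /(_ isT).
- case: (eqVneq (~: supp l) set0) => [|/set0Pn [t0 t0n]].
  + move=> Hc; have suppT : forall w, w \in supp l.
      by move=> w; apply/negPn; rewrite -in_setC Hc inE.
    have tnS : t \notin S by move: tS; rewrite !inE => /andP[].
    have [a [b [ab aS bS]]] := cross sS' tnS.
    by have := noedge a b aS; rewrite inE bS suppT ab => /(_ isT).
  + have sl : s \in supp l by apply: (subsetP sS).
    move: t0n; rewrite inE => t0n.
    have [a [b [ab al bl]]] := cross sl t0n.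
    have lb : l 0 b = 0 by move: bl; rewrite suppE negbK => /eqP.
    have anb : a != b by apply: contraNneq bl => <-.
    pose l2 := l + Ebas b.
    have chil2 : chi l2 = chi l + 1 - bil l (Ebas b) by rewrite /l2 chiD // chiE.
    have l2i : inL l2 by apply: inLD => //; apply: inLE.
    have l20 : vle 0 l2.
      move=> w; rewrite vaddE vzeroE Ebas_coord; apply: addr_ge0.
        by move: (l0 w); rewrite vzeroE.
      by case: eqP.
    have l2pos : vpos l2.
      split=> // l2z; move: (congr1 (fun x : vec n => x 0 b) l2z).
      by rewrite vaddE vzeroE Ebas_coord eqxx lb add0r; apply/eqP; rewrite oner_eq0.
    have suppl2 : supp l2 = b |: supp l.
      apply/setP => w; rewrite !inE vaddE Ebas_coord.
      case: (eqVneq w b) => [->|wb]; first by rewrite /= lb add0r oner_eq0.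
      by rewrite /= addr0.
    have al1 : 1 <= l 0 a := supp_pos li l0 al.
    have adjS : (exists2 a1, a1 \in S & adj a1 b) ->
                (exists2 a2, a2 \in supp l :\: S & adj a2 b) -> False.
      move=> [a1 a1S a1b] [a2 a2S a2b].
      have a1l : a1 \in supp l by apply: (subsetP sS).
      have a2l : a2 \in supp l by move: a2S; rewrite inE => /andP[].
      have a1nb : a1 != b by apply: contraNneq bl => <-.
      have a2nb : a2 != b by apply: contraNneq bl => <-.
      have a12 : a1 != a2 by apply: contraTneq a2S => <-; rewrite inE a1S.
      have := bil_ge2 l0 lb a1b a1nb a2b a2nb a12.
      have := supp_pos li l0 a1l; have := supp_pos li l0 a2l.
      move=> h1 h2 h3.
      have := chi_ge0 l2i l2pos; rewrite chil2 => h4.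
      have : chi l + 1 - bil l (Ebas b) <= -1.
        have : 2 <= bil l (Ebas b) by apply: le_trans h3; apply: lerD.
        move: chil => ??; lra.
      move=> h5; have h6 := le_trans h4 h5; lra.
    have chil2le : chi l2 <= 0.
      rewrite chil2; have := bil_ge1 l0 lb ab anb; move: chil al1 => ???; lra.
    have hk2 : (#|~: supp l2| <= k)%N.
      rewrite suppl2 setCU -ltnS; apply: leq_trans hk.
      apply: proper_card; rewrite properE subsetIr /=.
      apply/subsetPn; exists b; first by rewrite inE.
      by rewrite !inE eqxx.
    case: (boolP (a \in S)) => aS.
    * apply: (IH l2 (b |: S)) => //.
      -- by rewrite suppl2 setUS.
      -- by exists s; rewrite !inE sS' orbT.
      -- exists t; have tb : t != b.
           by apply: contraTneq tS => ->; rewrite inE (negbTE bl) andbF.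
         by move: tS; rewrite suppl2 !inE (negbTE tb) /=.
      -- move=> x y; rewrite suppl2 !inE => /orP[/eqP->|xS] /andP[].
         ++ move=> /norP[yb ynS]; rewrite (negbTE yb) /= => yl.
            rewrite adj_sym; apply/negP => yb'.
            by apply: adjS; [exists a | exists y => //; rewrite inE ynS suppE].
         ++ move=> /norP[yb ynS]; rewrite (negbTE yb) /= => yl.
            by apply: noedge; rewrite // inE ynS suppE.
    * have aS2 : a \in supp l :\: S by rewrite inE aS.
      apply: (IH l2 S) => //.
      -- by rewrite suppl2; apply: subsetU; rewrite sS orbT.
      -- by exists s.
      -- by exists t; move: tS; rewrite suppl2 !inE => /andP[-> ->]; rewrite orbT.
      -- move=> x y xS; rewrite suppl2 !inE => /andP[ynS].
         case/orP => [/eqP->|yl].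
         ++ apply/negP => xb.
            by apply: adjS; [exists x | exists a].
         ++ by apply: noedge; rewrite // inE ynS suppE.
Qed.


Lemma conn_split l (S : {set 'I_n}) :
  inL l -> vle 0 l -> chi l <= 0 -> S \subset supp l ->
  (exists s, s \in S) -> (exists t, t \in supp l :\: S) ->
  (forall a b, a \in S -> b \in supp l :\: S -> ~~ adj a b) -> False.
Proof. exact: (@conn_split_k #|~: supp l| l S (leqnn _)). Qed.

Lemma ZK_inSp : inSp adj e ZK.
Proof.
split; first exact: inL'_ZK.
by move=> v; rewrite bil_ZK // -lerBrDr sub0r -[2]/(2%:~R) -rmorphN ler_int e_le.
Qed.

Lemma trick c : inSp adj e c -> inL (c - ZK) -> vle c ZK -> c <> ZK ->
  (forall v, c 0 v != ZK 0 v -> bil c (Ebas v) = 0) /\ chi (ZK - c) <= 0.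
Proof.
move=> [cL' cS] cL cle cne.
set A := ZK - c.
have AL : inL A by rewrite /A -opprB; apply: inLN.
have A0 : vle 0 A by move=> v; rewrite vzeroE vsubE subr_ge0.
have Apos : vpos A by split=> // /eqP; rewrite subr_eq0 => /eqP H; apply: cne.
have chiA : chi A = (\sum_w A 0 w * bil c (Ebas w)) / 2.
  rewrite chi_dual //.
  have -> : ZK - A = c by rewrite /A opprD opprK addrA subrr add0r.
  by rewrite (bil_sym e adj_sym) -bil_sum.
have terms : forall w, 0 <= - (A 0 w * bil c (Ebas w)).
  move=> w; rewrite oppr_ge0; apply: mulr_ge0_le0 => //.
  by move: (A0 w); rewrite vzeroE.
have sum0 : \sum_w - (A 0 w * bil c (Ebas w)) = 0.
  apply/eqP; rewrite eq_le sumr_ge0 ?andbT; last by move=> w _; exact: terms.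
  rewrite sumrN oppr_le0.
  by have := chi_ge0 AL Apos; rewrite chiA pmulr_lge0 // invr_gt0.
split.
  move=> v cv; have := psumr_eq0P (fun w _ => terms w) sum0 (i:=v) isT.
  move/eqP; rewrite oppr_eq0 mulf_eq0 => /orP[|/eqP //].
  by rewrite /A vsubE subr_eq0 eq_sym (negbTE cv).
rewrite chiA -[X in X / 2]opprK -sumrN sum0 oppr0 mul0r //.
Qed.

Definition SpLB (B : {set 'I_n}) y := in_SpL_B adj e B y.

Lemma SpLB_ge0 B y : in_SpL_B adj e B y -> vle 0 y.
Proof.
move=> [yL yout yB].
pose nn : vec n := \row_v (if y 0 v < 0 then - y 0 v else 0).
pose p := y + nn.
have nnE v : nn 0 v = (if y 0 v < 0 then - y 0 v else 0) by rewrite mxE.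
have nn0 v : 0 <= nn 0 v by rewrite nnE; case: ifP => // /ltW; rewrite oppr_ge0.
have p0 v : 0 <= p 0 v.
  rewrite vaddE nnE; case: ifP; first by rewrite subrr.
  by move=> /negbT; rewrite -leNgt addr0.
have bnn : 0 <= bil nn nn.
  rewrite bil_sum //; apply: sumr_ge0 => v _.
  case: (ltP (y 0 v) 0) => yv.
  - apply: mulr_ge0 => //.
    have -> : nn = p - y by rewrite /p addrC addKr.
    rewrite bilBl subr_ge0.
    have vB : v \in B by apply: contraTT yv => /yout ->; rewrite ltxx.
    apply: le_trans (yB v vB) _.
    rewrite bilE; apply: sumr_ge0 => w _.
    case: (eqVneq w v) => [->|wv].
      by rewrite vaddE nnE yv subrr mul0r.
    by apply: mulr_ge0 => //; exact: Imx_off.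
  - by rewrite nnE ltNge yv /= mul0r.
have nn_eq0 : nn = 0.
  apply/eqP; apply: contraTT bnn => /negP nz.
  by rewrite -ltNge; apply: negd; apply/negP.
move=> v; rewrite vzeroE; have := congr1 (fun x : vec n => x 0 v) nn_eq0.
rewrite nnE vzeroE; case: ifP => [_ /eqP|/negbT]; first by rewrite oppr_eq0 => /eqP ->.
by rewrite -leNgt.
Qed.

Lemma exists_nz y : y <> 0 -> exists v, y 0 v != 0.
Proof.
move=> ny; case: (pickP (fun v => y 0 v != 0)) => [v hv|H]; first by exists v.
exfalso; apply: ny; apply/matrixP => i j; rewrite [i]ord1 vzeroE.
by move: (H j) => /= /negbFE /eqP.
Qed.

Lemma full_supp B A y : inL A -> vle 0 A -> chi A <= 0 -> supp A = B ->
  in_SpL_B adj e B y -> y <> 0 -> forall v, v \in B -> 0 < y 0 v.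
Proof.
move=> AL A0 chiA suppA ySp ny v vB.
have y0 := SpLB_ge0 ySp; case: ySp => [yL yout yB].
rewrite lt_def; move: (y0 v); rewrite vzeroE => -> ; rewrite andbT.
apply/negP => /eqP yv.
have [s ys] := exists_nz ny.
apply: (@conn_split A (supp y)) => //.
- apply/subsetP => w; rewrite suppA suppE; apply: contraR => wB.
  by rewrite yout.
- by exists s; rewrite suppE.
- by exists v; rewrite suppA !inE yv eqxx.
- move=> a b; rewrite suppE suppA inE suppE negbK => ya /andP[/eqP yb bB].
  apply/negP => ab.
  have anb : a != b by apply: contraNneq ya => ->; rewrite yb.
  have := bil_ge1 y0 yb ab anb; have := yB b bB.
  have : 0 < y 0 a by rewrite lt_def ya; move: (y0 a); rewrite vzeroE.
  move=> ???; lra.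
Qed.

Definition vmin x y : vec n := \row_v Num.min (x 0 v) (y 0 v).

Lemma vminE x y v : vmin x y 0 v = Num.min (x 0 v) (y 0 v).
Proof. by rewrite mxE. Qed.

Lemma vmin_lel x y : vle (vmin x y) x.
Proof. by move=> v; rewrite vminE ge_min lexx. Qed.
Lemma vmin_ler x y : vle (vmin x y) y.
Proof. by move=> v; rewrite vminE ge_min lexx orbT. Qed.

Lemma SpLB_min B x y : in_SpL_B adj e B x -> in_SpL_B adj e B y ->
  in_SpL_B adj e B (vmin x y).
Proof.
move=> [xL xo xB] [yL yo yB]; split.
- by move=> v; rewrite vminE; case: (leP (x 0 v) (y 0 v)).
- by move=> v vB; rewrite vminE xo // yo // minxx.
- move=> v vB; case: (leP (x 0 v) (y 0 v)) => h.
  + apply: le_trans (xB v vB); apply: bil_mono; first exact: vmin_lel.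
    by rewrite vminE min_l.
  + apply: le_trans (yB v vB); apply: bil_mono; first exact: vmin_ler.
    by rewrite vminE min_r // ltW.
Qed.

Lemma Zmin_le B A Z D : inL A -> vle 0 A -> chi A <= 0 -> supp A = B ->
  is_Zmin adj e B Z -> in_SpL_B adj e B D -> D <> 0 -> vle Z D.
Proof.
move=> AL A0 chiA suppA [ZS Znz Zmin] DS Dnz.
have mS := SpLB_min DS ZS.
suff -> : Z = vmin D Z by exact: vmin_lel.
symmetry; apply: Zmin => //; last exact: vmin_ler.
have [v Zv] := exists_nz Znz.
have vB : v \in B by case: ZS => _ Zo _; apply: contraR Zv => /Zo ->.
move=> /(congr1 (fun x : vec n => x 0 v)); rewrite vminE vzeroE.
have h1 := full_supp AL A0 chiA suppA DS Dnz vB.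
have h2 := full_supp AL A0 chiA suppA ZS Znz vB.
by case: (leP (D 0 v) (Z 0 v)) => _ h; move: h1 h2; rewrite ?h ?lt_def ?eqxx.
Qed.

Lemma CsS (Zs : nat -> vec n) k : Cs Zs k.+1 = Cs Zs k + Zs k.+1.
Proof. by rewrite /Cs big_ord_recr. Qed.
Lemma Cs0 (Zs : nat -> vec n) : Cs Zs 0 = Zs 0%N.
Proof. by rewrite /Cs big_ord1. Qed.

Definition Pinv u c := [/\ inSp adj e c, inL (c - ZK), vle c u & vle c ZK].

Lemma step m Bs Zs u k : NN_seq adj e m Bs Zs -> inSp adj e u -> inL (u - ZK) ->
  vle u ZK -> u <> ZK ->
  Pinv u (Cs Zs k) -> (k <= m)%N -> Cs Zs k <> u -> Pinv u (Cs Zs k.+1).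
Proof.
move=> [B0 sZK Zmink nn Cm] uSp uL uZ unZ [cSp cL cu cZ] km cnu.
set c := Cs Zs k in cSp cL cu cZ cnu *.
have cnZ : c <> ZK.
  move=> cZK; apply: unZ; apply: vle_antisym => //; by rewrite -cZK.
have [_ BE] := nn k km.
have ZB := Zmink k.+1 km.
rewrite -/c in BE.
set B := Bs k.+1 in BE ZB.
set Z := Zs k.+1 in ZB.
have [h0 chiA] := trick cSp cL cZ cnZ.
have AL : inL (ZK - c) by rewrite -opprB; apply: inLN.
have A0 : vle 0 (ZK - c) by move=> v; rewrite vzeroE vsubE subr_ge0.
have suppA : supp (ZK - c) = B by [].
have inB v : (v \in B) = (c 0 v != ZK 0 v).
  by rewrite BE suppE vsubE subr_eq0 eq_sym.
have DL : inL (u - c).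
  have -> : u - c = (u - ZK) - (c - ZK) by rewrite opprB addrA subrK.
  exact: inLB.
have DS : in_SpL_B adj e B (u - c).
  split=> //.
  - move=> v; rewrite inB negbK => /eqP cv; rewrite vsubE.
    apply/eqP; rewrite subr_eq0 eq_le; apply/andP; split; last exact: cu.
    by rewrite cv; exact: uZ.
  - move=> v; rewrite inB => cv; rewrite bilBl h0 // subr0.
    by case: uSp => _ ->.
have Dnz : u - c <> 0 by move/eqP; rewrite subr_eq0 => /eqP H; apply: cnu.
have ZD := Zmin_le AL A0 chiA suppA ZB DS Dnz.
have [ZS Znz _] := ZB; have [ZL Zo ZBneg] := ZS.
have cZu : vle (c + Z) u.
  move=> v; rewrite vaddE; have := ZD v; rewrite vsubE; lra.
have cZZK : vle (c + Z) ZK by move=> v; apply: le_trans (cZu v) (uZ v).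
rewrite CsS -/c -/Z; split => //.
- split; first by apply: inL'D; [case: cSp | exact: inL_L'].
  move=> v; case: (boolP (v \in B)) => vB.
  + by rewrite bilDl h0 ?add0r ?ZBneg // -inB.
  + apply: (@le_trans _ _ (bil ZK (Ebas v))); last by case: ZK_inSp => _ ->.
    apply: bil_mono => //.
    by rewrite vaddE Zo // addr0; move: vB; rewrite inB negbK => /eqP.
- by rewrite addrAC; apply: inLD.
Qed.

Lemma chain m Bs Zs u : NN_seq adj e m Bs Zs -> inSp adj e u -> inL (u - ZK) ->
  vle u ZK -> u <> ZK -> exists2 k, (k <= m)%N & u = Cs Zs k.
Proof.
move=> NN uSp uL uZ unZ.
have NN' := NN; case: NN' => [B0 [sSp sL smin] Zmink nn Cm].
have P0 : Pinv u (Cs Zs 0).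
  rewrite Cs0; split => //; first exact: smin.
  by apply: smin; [exact: ZK_inSp | rewrite subrr; exact: inL0].
have Pk : forall k, (k <= m.+1)%N -> (forall i, (i < k)%N -> Cs Zs i <> u) ->
  Pinv u (Cs Zs k).
  elim=> [//|k IH] hk hi.
  apply: (step NN) => //.
  - by apply: IH => [|i ik]; [exact: ltnW | apply: hi; exact: ltnW].
  - by apply: hi.
case: (boolP [exists k : 'I_m.+1, u == Cs Zs k]) => [/existsP [k /eqP hk]|/existsPn H].
  by exists k => //; rewrite -ltnS.
exfalso; apply: unZ.
have [_ _ hu hZ] := Pk m.+1 (leqnn _) (fun i hi => fun E => (negP (H (Ordinal hi))) (introT eqP (esym E))).
by apply: vle_antisym => //; rewrite -Cm.
Qed.
End Main.

Theorem mainTheorem1 (n : nat) (adj : rel 'I_n) (e : 'I_n -> int)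
    (m : nat) (Bs : nat -> {set 'I_n}) (Zs : nat -> 'rV[rat]_n) :
  is_tree adj -> neg_def adj e -> elliptic adj e ->
  NN_seq adj e m Bs Zs ->
  forall ell l' : 'rV[rat]_n,
    inSuppP0 adj e ell -> assoc_cycle adj e ell l' ->
    (exists2 k, (k <= m)%N & l' = Cs Zs k) /\
    (forall k, (k <= m)%N -> l' = Cs Zs k -> negset ell = ~: Bs k.+1).
Proof.
move=> [adj_sym _ conn _] negd [e_le _ chi_ge0] NN ell l'
  [ellL ellnprec zc] [l'L' l'ZK l'neg [mv ellE]].
set x := ZK adj e - Eall n - ell.
set S := \sum_(v in negset ell) (mv v)%:R *: Ebas v.
have SE w : S 0 w = if w \in negset ell then (mv w)%:R else 0.
  rewrite /S summxE; case: ifP => wn.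
    rewrite (bigD1 w) //= big1 => [|v /andP[_ vw]].
      by rewrite mxE Ebas_coord eqxx mulr1 addr0.
    by rewrite mxE Ebas_coord (negbTE vw) mulr0.
  rewrite big1 // => v vn; rewrite mxE Ebas_coord.
  by case: (eqVneq v w) => [vw|_]; [move: vn; rewrite vw wn | rewrite mulr0].
have S0 w : 0 <= S 0 w by rewrite SE; case: ifP => // _; rewrite ler0n.
have SL w : S 0 w \is a Num.int by rewrite SE; case: ifP => _; rewrite ?rpred0 ?rpred_nat.
have Sout w : w \notin negset ell -> S 0 w = 0 by rewrite SE => /negbTE ->.
have EallE w : Eall n 0 w = 1 by rewrite mxE.
have hl' w : l' 0 w = ZK adj e 0 w - 1 - ell 0 w - S 0 w.
  have := congr1 (fun y : vec n => y 0 w) ellE; rewrite /= !vsubE EallE => ->; lra.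
have hx w : x 0 w = ZK adj e 0 w - 1 - ell 0 w by rewrite /x !vsubE EallE.
have [kf hkf] : exists kf : 'I_n -> nat,
    \sum_v ((kf v)%:R *: Estar adj e v) = x.
  case: (pickP (fun kf : {ffun 'I_n -> 'I_(zbound adj e x)} =>
           \sum_v ((kf v : nat)%:R *: Estar adj e v) == x)) => [kf /eqP hk|H].
    by exists (fun v => kf v : nat).
  by move: zc; rewrite /zcoef big_pred0 ?eqxx.
have bilx w : bil adj e x (Ebas w) = - ((kf w)%:R).
  rewrite -hkf bil_sumr (bigD1 w) //= big1 => [|v vw].
    by rewrite bilZl bil_Estar // eqxx addr0 mulrN1.
  by rewrite bilZl bil_Estar // (negbTE vw) oppr0 mulr0.
have xneg w : bil adj e x (Ebas w) <= 0 by rewrite bilx oppr_le0 ler0n.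
have l'x : vle l' x by move=> w; rewrite hl' hx; have := S0 w; lra.
have l'Sp : inSp adj e l'.
  split=> // w; case: (boolP (w \in negset ell)) => wn.
  - apply: (@le_trans _ _ (bil adj e (ZK adj e) (Ebas w))).
      by apply: bil_mono => //; exact: l'neg.
    by case: (ZK_inSp negd e_le) => _ ->.
  - apply: le_trans (xneg w); apply: bil_mono => //.
    by rewrite hl' hx Sout // subr0.
have l'L : inL (l' - ZK adj e).
  move=> w; rewrite vsubE hl'.
  have -> : ZK adj e 0 w - 1 - ell 0 w - S 0 w - ZK adj e 0 w = - (1 + ell 0 w + S 0 w).
    by lra.
  by rewrite rpredN !rpredD ?rpred1.
have [w0 hw0] : exists w, 0 <= ell 0 w.
  case: (pickP (fun w => 0 <= ell 0 w)) => [w hw|H]; first by exists w.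
  by exfalso; apply: ellnprec => w; rewrite vzeroE ltNge H.
have w0n : w0 \notin negset ell by rewrite inE -leNgt.
have l'nZ : l' <> ZK adj e.
  move=> /(congr1 (fun y : vec n => y 0 w0)); rewrite hl' Sout //; lra.
split.
  exact: (chain adj_sym negd e_le chi_ge0 conn NN l'Sp l'L l'ZK l'nZ).
move=> k km l'C.
case: NN => _ _ _ nn _; have [_ ->] := nn k km.
rewrite -l'C; apply/setP => w; rewrite !inE vsubE subr_eq0 negbK.
case: (boolP (w \in negset ell)) => wn.
  by rewrite (l'neg w wn) eqxx; move: wn; rewrite inE => ->.
move: (wn); rewrite inE => /negbTE ->; apply/esym/negbTE.
rewrite hl' Sout //; move: wn; rewrite inE -leNgt => h.
apply/negP => /eqP; lra.
Qed.
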